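(* Every flexible C-loop is diassociative. In particular, every commutative C-loop is diassociative.
   Context: A C-loop is a loop satisfying $x(y(yz))=((xy)y)z$ for all $x,y,z$. A loop is flexible if $(xy)x=x(yx)$ for all $x,y$. A loop is diassociative if every subloop generated by two elements is a group. *)

(* Defs.v *)
(* A loop: a quasigroup (with left/right divisions, equational axioms
   equivalent to unique solvability of a*x=b and y*a=b) with a two-sided
   identity element. *)
Record loop (T : Type) := Loop {
  lmul : T -> T -> T;
  lldiv : T -> T -> T;
  lrdiv : T -> T -> T;   (* lrdiv y x = y / x, the unique z with z*x = y *)
  lone : T;
  lmul_ldiv : forall x y, lmul x (lldiv x y) = y;
  lldiv_mul : forall x y, lldiv x (lmul x y) = y;
  lrdiv_mul : forall x y, lmul (lrdiv y x) x = y;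
  lmul_rdiv : forall x y, lrdiv (lmul y x) x = y;
  lone_mul : forall x, lmul lone x = x;
  lmul_one : forall x, lmul x lone = x
}.

Arguments lmul {T} l _ _.
Arguments lldiv {T} l _ _.
Arguments lrdiv {T} l _ _.
Arguments lone {T} l.

Definition C_loop {T} (L : loop T) : Prop :=
  forall x y z, lmul L x (lmul L y (lmul L y z)) = lmul L (lmul L (lmul L x y) y) z.

Definition flexible {T} (L : loop T) : Prop :=
  forall x y, lmul L (lmul L x y) x = lmul L x (lmul L y x).

Definition commutative_loop {T} (L : loop T) : Prop :=
  forall x y, lmul L x y = lmul L y x.

Inductive gen2 {T} (L : loop T) (a b : T) : T -> Prop :=
  | gen2_a : gen2 L a b a
  | gen2_b : gen2 L a b b
  | gen2_one : gen2 L a b (lone L)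
  | gen2_mul : forall x y, gen2 L a b x -> gen2 L a b y -> gen2 L a b (lmul L x y)
  | gen2_ldiv : forall x y, gen2 L a b x -> gen2 L a b y -> gen2 L a b (lldiv L x y)
  | gen2_rdiv : forall x y, gen2 L a b x -> gen2 L a b y -> gen2 L a b (lrdiv L x y).

(* Diassociative: every subloop generated by two elements is a group, i.e.
   (being a subloop) its multiplication is associative. *)
Definition diassociative {T} (L : loop T) : Prop :=
  forall a b x y z, gen2 L a b x -> gen2 L a b y -> gen2 L a b z ->
    lmul L (lmul L x y) z = lmul L x (lmul L y z).

(* Main.v *)
Require Import Defs.
From Stdlib Require Import Setoid.


Definition inv {T} (L : loop T) y := lldiv L y (lone L).

Lemma LAP {T} (L : loop T) (HC : C_loop L) y z :
  lmul L y (lmul L y z) = lmul L (lmul L y y) z.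
Proof. pose proof (HC (lone L) y z) as H. rewrite !lone_mul in H. exact H. Qed.

Lemma RAP {T} (L : loop T) (HC : C_loop L) x y :
  lmul L x (lmul L y y) = lmul L (lmul L x y) y.
Proof. pose proof (HC x y (lone L)) as H. rewrite !lmul_one in H. exact H. Qed.

Lemma MID {T} (L : loop T) (HC : C_loop L) x y z :
  lmul L x (lmul L (lmul L y y) z) = lmul L (lmul L x (lmul L y y)) z.
Proof. rewrite <- LAP, RAP by exact HC. apply HC. Qed.

Lemma rinv {T} (L : loop T) y : lmul L y (inv L y) = lone L.
Proof. apply lmul_ldiv. Qed.

Lemma RIP {T} (L : loop T) (HC : C_loop L) w y :
  lmul L (lmul L w y) (inv L y) = w.
Proof.
  assert (H : forall x, lmul L x y = lmul L (lmul L (lmul L x y) y) (inv L y)).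
  { intro x. rewrite <- RAP by exact HC. rewrite <- MID by exact HC.
    rewrite <- LAP by exact HC. rewrite rinv, lmul_one. reflexivity. }
  pose proof (H (lrdiv L w y)) as H1. rewrite lrdiv_mul in H1. auto.
Qed.

Lemma linv {T} (L : loop T) (HC : C_loop L) y : lmul L (inv L y) y = lone L.
Proof.
  pose proof (RIP L HC (lrdiv L (lone L) y) y) as H.
  rewrite lrdiv_mul, lone_mul in H. rewrite H. apply lrdiv_mul.
Qed.

Lemma LIP {T} (L : loop T) (HC : C_loop L) y u :
  lmul L (inv L y) (lmul L y u) = u.
Proof.
  assert (H : forall z, lmul L (inv L y) (lmul L y (lmul L y z)) = lmul L y z).
  { intro z. rewrite LAP by exact HC. rewrite MID by exact HC.
    rewrite RAP by exact HC. rewrite linv by exact HC. rewrite lone_mul. reflexivity. }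
  pose proof (H (lldiv L y u)) as H1. rewrite lmul_ldiv in H1. exact H1.
Qed.

Lemma inv_inv {T} (L : loop T) (HC : C_loop L) y : inv L (inv L y) = y.
Proof. unfold inv at 1. rewrite <- (linv L HC y). apply lldiv_mul. Qed.

Lemma RIP' {T} (L : loop T) (HC : C_loop L) w y :
  lmul L (lmul L w (inv L y)) y = w.
Proof. rewrite <- (inv_inv L HC y) at 2. apply RIP; auto. Qed.

Lemma LIP' {T} (L : loop T) (HC : C_loop L) y u :
  lmul L y (lmul L (inv L y) u) = u.
Proof. rewrite <- (inv_inv L HC y) at 1. apply LIP; auto. Qed.

Lemma AAIP {T} (L : loop T) (HC : C_loop L) x y :
  inv L (lmul L x y) = lmul L (inv L y) (inv L x).
Proof.
  pose proof (RIP L HC (inv L x) (lmul L x y)) as H.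
  rewrite LIP in H by exact HC. rewrite <- H. rewrite LIP by exact HC. reflexivity.
Qed.

Lemma ldiv_eq {T} (L : loop T) (HC : C_loop L) x y : lldiv L x y = lmul L (inv L x) y.
Proof. rewrite <- (LIP' L HC x y) at 1. apply lldiv_mul. Qed.

Lemma rdiv_eq {T} (L : loop T) (HC : C_loop L) x y : lrdiv L y x = lmul L y (inv L x).
Proof. rewrite <- (RIP' L HC y x) at 1. apply lmul_rdiv. Qed.

Lemma lcancel {T} (L : loop T) x y z : lmul L x y = lmul L x z -> y = z.
Proof. intro H. rewrite <- (lldiv_mul _ L x y), H. apply lldiv_mul. Qed.

Lemma rcancel {T} (L : loop T) x y z : lmul L y x = lmul L z x -> y = z.
Proof. intro H. rewrite <- (lmul_rdiv _ L x y), H. apply lmul_rdiv. Qed.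

Section Nuc.
Variable T : Type.
Variable L : loop T.
Hypothesis HC : C_loop L.
Local Notation "x * y" := (lmul L x y).
Local Notation e := (lone L).
Local Notation i := (inv L).

Definition nuc n := forall x y,
  (n * x) * y = n * (x * y) /\ (x * n) * y = x * (n * y) /\ (x * y) * n = x * (y * n).

Lemma nucL {n} : nuc n -> forall x y, (n * x) * y = n * (x * y).
Proof. intros H x y; apply H. Qed.
Lemma nucM {n} : nuc n -> forall x y, (x * n) * y = x * (n * y).
Proof. intros H x y; apply H. Qed.
Lemma nucR {n} : nuc n -> forall x y, (x * y) * n = x * (y * n).
Proof. intros H x y; apply H. Qed.

Lemma inv_sq y : i (y * y) = i y * i y.
Proof. apply AAIP; auto. Qed.

Lemma sq_nuc y : nuc (y * y).
Proof.
  intros x z. split; [|split].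
  -
    set (s := y * y).
    assert (E : i (s * x) * (s * (x * z)) = z).
    { rewrite AAIP by auto. unfold s. rewrite inv_sq.
      rewrite <- MID by auto. rewrite <- inv_sq. fold s.
      rewrite LIP, LIP by auto. reflexivity. }
    rewrite <- E at 1. rewrite LIP' by auto. reflexivity.
  - symmetry. apply MID; auto.
  - set (s := y * y).
    assert (E : (((x * z) * s) * i (z * s)) = x).
    { rewrite AAIP by auto. unfold s. rewrite inv_sq.
      rewrite MID by auto. rewrite <- inv_sq. fold s.
      rewrite RIP, RIP by auto. reflexivity. }
    rewrite <- E at 2. rewrite RIP' by auto. reflexivity.
Qed.

Lemma nuc_mul n k : nuc n -> nuc k -> nuc (n * k).
Proof.
  intros Hn Hk x y. split; [|split].
  - rewrite (nucL Hn), (nucL Hn), (nucL Hk), <- (nucL Hn). reflexivity.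
  - rewrite <- (nucM Hn), (nucM Hk), (nucM Hn). rewrite (nucL Hn). reflexivity.
  - rewrite <- (nucM Hn (x * y) k), <- (nucM Hn y k), (nucR Hn), (nucR Hk). reflexivity.
Qed.

Lemma nuc_inv n : nuc n -> nuc (i n).
Proof.
  intros Hn x y. split; [|split].
  - rewrite <- (LIP' L HC n x) at 2. rewrite (nucL Hn), LIP by auto. reflexivity.
  - rewrite <- (RIP' L HC x n) at 2. rewrite (nucM Hn), LIP' by auto. reflexivity.
  - rewrite <- (RIP' L HC y n) at 1. rewrite <- (nucR Hn), RIP by auto. reflexivity.
Qed.

Lemma nuc_one : nuc e.
Proof. intros x y. rewrite !lone_mul, !lmul_one. auto. Qed.

Lemma normal x {n} : nuc n -> exists n', nuc n' /\ x * n = n' * x.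
Proof.
  intro Hn. exists ((x * n) * i x). split.
  2: { rewrite RIP' by auto. reflexivity. }
  assert (E1 : x * (n * x) = ((x * n) * (x * n)) * i n).
  { rewrite (nucM Hn x (x * n)), <- (nucL Hn x n), <- (nucR Hn x (n * x)), RIP by auto. reflexivity. }
  assert (E2 : (x * n) * i x = (x * (n * x)) * (i x * i x)).
  { rewrite <- (nucM Hn). rewrite (nucR (sq_nuc (i x))). rewrite LIP' by auto. reflexivity. }
  rewrite E2, E1. apply nuc_mul; [apply nuc_mul|].
  - apply sq_nuc.
  - apply nuc_inv; auto.
  - apply sq_nuc.
Qed.


Definition assoc u v t := (u * v) * t = u * (v * t).

Lemma L1 n u v t : nuc n -> assoc u v t -> assoc (n * u) v t.
Proof.
  unfold assoc; intros Hn H.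
  rewrite (nucL Hn u v), (nucL Hn (u * v) t), H, <- (nucL Hn u (v * t)). reflexivity.
Qed.

Lemma L2 n u v t : nuc n -> assoc u v t -> assoc u (n * v) t.
Proof.
  unfold assoc; intros Hn H.
  destruct (normal u Hn) as [n' [Hn' E]].
  rewrite <- (nucM Hn u v), E, (nucL Hn' u v), (nucL Hn' (u * v) t).
  rewrite (nucL Hn v t), <- (nucM Hn u (v * t)), E, (nucL Hn' u (v * t)), H.
  reflexivity.
Qed.

Lemma L3 n u v t : nuc n -> assoc u v t -> assoc u v (n * t).
Proof.
  unfold assoc; intros Hn H.
  destruct (normal v Hn) as [n' [Hn' E]].
  destruct (normal u Hn') as [n'' [Hn'' E']].
  assert (E2 : (u * v) * n = n'' * (u * v)).
  { rewrite (nucR Hn u v), E, <- (nucM Hn' u v), E', (nucL Hn'' u v). reflexivity. }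
  rewrite <- (nucM Hn (u * v) t), E2, (nucL Hn'' (u * v) t).
  rewrite <- (nucM Hn v t), E, (nucL Hn' v t), <- (nucM Hn' u (v * t)), E'.
  rewrite (nucL Hn'' u (v * t)), H. reflexivity.
Qed.

Lemma Kcomm x y : exists n, nuc n /\ y * x = n * (x * y).
Proof.
  destruct (normal (y * x) (sq_nuc (i y))) as [c [Hc Ec]].
  exists ((y * x) * i (x * y)). split.
  2: { rewrite RIP' by auto. reflexivity. }
  assert (Ey : i y = (i y * i y) * y) by (symmetry; apply RIP'; auto).
  assert (Ex : i x = x * (i x * i x)) by (symmetry; apply LIP'; auto).
  assert (E : (y * x) * i (x * y) = c * (((y * x) * (y * x)) * (i x * i x))).
  { rewrite AAIP by auto. rewrite Ey at 1. rewrite Ex at 1.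
    rewrite (nucL (sq_nuc (i y)) y (x * (i x * i x))).
    rewrite <- (nucR (sq_nuc (i x)) y x).
    rewrite <- (nucM (sq_nuc (i y)) (y * x) ((y * x) * (i x * i x))).
    rewrite Ec, (nucL Hc (y * x)).
    rewrite <- (nucR (sq_nuc (i x)) (y * x) (y * x)). reflexivity. }
  rewrite E. apply nuc_mul; auto. apply nuc_mul; apply sq_nuc.
Qed.

Lemma A1 x y : assoc x y (x * y).
Proof.
  replace (assoc x y (x * y)) with (assoc x y (((x * y) * (x * y)) * i (x * y))) by (rewrite RIP; auto).
  apply L3; [apply sq_nuc|]. unfold assoc.
  rewrite rinv, AAIP, LIP', rinv by auto. reflexivity.
Qed.

Lemma A2 x y : assoc (x * y) x y.
Proof.
  replace (x * y) with (((x * y) * (x * y)) * i (x * y)) at 1 by (apply RIP; auto).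
  apply L1; [apply sq_nuc|]. unfold assoc.
  rewrite linv by auto. rewrite AAIP by auto. rewrite RIP' by auto. rewrite linv by auto. reflexivity.
Qed.

Lemma A3 x y : assoc x (x * y) y.
Proof.
  unfold assoc. rewrite LAP, <- RAP, <- RAP, <- LAP by auto. reflexivity.
Qed.

Lemma Axxy x y : assoc x x y.
Proof. unfold assoc. rewrite LAP by auto. reflexivity. Qed.
Lemma Ayxx x y : assoc y x x.
Proof. unfold assoc. rewrite RAP by auto. reflexivity. Qed.
Lemma Axyx x y : flexible L -> assoc x y x.
Proof. unfold assoc. intro HF. apply HF. Qed.
Lemma Ae1 v t : assoc e v t.
Proof. unfold assoc. rewrite !lone_mul. reflexivity. Qed.
Lemma Ae2 v t : assoc v e t.
Proof. unfold assoc. rewrite lone_mul, lmul_one. reflexivity. Qed.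
Lemma Ae3 v t : assoc v t e.
Proof. unfold assoc. rewrite !lmul_one. reflexivity. Qed.

Section AB.
Variables a b : T.
Definition W w := w = e \/ w = a \/ w = b \/ w = a * b.
Definition G x := exists n w, nuc n /\ W w /\ x = n * w.

Lemma assocW w1 w2 w3 : flexible L -> W w1 -> W w2 -> W w3 -> assoc w1 w2 w3.
Proof.
  intros HF H1 H2 H3.
  destruct (Kcomm b a) as [n [Hn En]].
  destruct H1 as [ -> | [ -> | [ -> | -> ]]]; try apply Ae1;
  destruct H2 as [ -> | [ -> | [ -> | -> ]]]; try apply Ae2;
  destruct H3 as [ -> | [ -> | [ -> | -> ]]]; try apply Ae3;
  try apply Axxy; try apply Ayxx; try (apply Axyx; exact HF);
  try apply A1; try apply A2; try apply A3.
  - rewrite En. apply L3; auto. apply A1.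
  - rewrite En. apply L2; auto. apply A3.
  - rewrite En. apply L1; auto. apply A2.
Qed.

Lemma G_W w : W w -> G w.
Proof. intro H. exists e, w. split; [apply nuc_one|]. split; auto. rewrite lone_mul; auto. Qed.

Lemma G_nuc n : nuc n -> G n.
Proof. intro H. exists n, e. split; auto. split. left; auto. rewrite lmul_one; auto. Qed.

Lemma G_nmul n x : nuc n -> G x -> G (n * x).
Proof.
  intros Hn [k [w [Hk [Hw ->]]]]. exists (n * k), w. split. apply nuc_mul; auto.
  split; auto. rewrite (nucL Hn). reflexivity.
Qed.

Lemma GW w1 w2 : W w1 -> W w2 -> G (w1 * w2).
Proof.
  intros H1 H2.
  destruct H1 as [ -> | [ -> | [ -> | -> ]]];
  [rewrite lone_mul; apply G_W; auto| | |];
  (destruct H2 as [ -> | [ -> | [ -> | -> ]]];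
  [rewrite lmul_one; apply G_W; unfold W; auto| | | ]);
  try (apply G_nuc; apply sq_nuc).
  - apply G_W. unfold W; auto.
  - rewrite LAP by auto. apply G_nmul. apply sq_nuc. apply G_W; unfold W; auto.
  - destruct (Kcomm a b) as [n [Hn ->]]. apply G_nmul; auto. apply G_W; unfold W; auto.
  - destruct (Kcomm (a * b) b) as [n [Hn ->]]. apply G_nmul; auto.
    rewrite <- RAP by auto. destruct (normal a (sq_nuc b)) as [n' [Hn' ->]].
    apply G_nmul; auto. apply G_W; unfold W; auto.
  - destruct (Kcomm a (a * b)) as [n [Hn ->]]. apply G_nmul; auto.
    rewrite LAP by auto. apply G_nmul. apply sq_nuc. apply G_W; unfold W; auto.
  - rewrite <- RAP by auto. destruct (normal a (sq_nuc b)) as [n' [Hn' ->]].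
    apply G_nmul; auto. apply G_W; unfold W; auto.
Qed.

Lemma G_mul x y : G x -> G y -> G (x * y).
Proof.
  intros [n1 [w1 [H1 [W1 ->]]]] [n2 [w2 [H2 [W2 ->]]]].
  destruct (normal w1 H2) as [n2' [H2' E]].
  rewrite (nucL H1), <- (nucM H2), E, (nucL H2').
  apply G_nmul; auto. apply G_nmul; auto. apply GW; auto.
Qed.

Lemma G_inv x : G x -> G (i x).
Proof.
  intros Gx. destruct Gx as [n [w [Hn [Hw ->]]]].
  rewrite AAIP by auto. apply G_mul.
  - replace (i w) with ((i w * i w) * w) by (apply RIP'; auto).
    apply G_nmul. apply sq_nuc. apply G_W; auto.
  - apply G_nuc. apply nuc_inv; auto.
Qed.

Lemma G_gen x : gen2 L a b x -> G x.
Proof.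
  induction 1.
  - apply G_W. unfold W; auto.
  - apply G_W. unfold W; auto.
  - apply G_W. unfold W; auto.
  - apply G_mul; auto.
  - rewrite ldiv_eq by auto. apply G_mul; auto. apply G_inv; auto.
  - rewrite rdiv_eq by auto. apply G_mul; auto. apply G_inv; auto.
Qed.

Lemma G_assoc x y z : flexible L -> G x -> G y -> G z -> assoc x y z.
Proof.
  intros HF [n1 [w1 [H1 [W1 ->]]]] [n2 [w2 [H2 [W2 ->]]]] [n3 [w3 [H3 [W3 ->]]]].
  apply L1; auto. apply L2; auto. apply L3; auto. apply assocW; auto.
Qed.
End AB.
End Nuc.

Theorem lemma4p4 :
  forall (T : Type) (L : loop T),
    (C_loop L -> flexible L -> diassociative L) /\
    (C_loop L -> commutative_loop L -> diassociative L).
Proof.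
  intros T L.
  assert (P : C_loop L -> flexible L -> diassociative L).
  { intros HC HF a b x y z Hx Hy Hz.
    apply (G_assoc T L HC a b x y z HF); apply G_gen; auto. }
  split; auto.
  intros HC HCo. apply P; auto.
  intros x y. rewrite (HCo (lmul L x y) x), (HCo y x). reflexivity.
Qed.
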